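(* Let $n\ge1$ and let $\mathcal{P}$ be a finite index set of pairs $(i,j)$. For each $(i,j)\in\mathcal{P}$ let $H^{[ij]}\in\mathbb{R}^{n\times n}$ be symmetric positive semidefinite, let $c^{[ij]}\in\mathbb{R}^n$ lie in the column space of $H^{[ij]}$, let $h^{[ij]}\in\mathbb{R}$, and let $w_{ij}\ge 0$. Define $$\mathfrak{B}^{[ij]}(\mathbf{u})=\exp\!\big(-\mathbf{u}^\top H^{[ij]}\mathbf{u}-(c^{[ij]})^\top\mathbf{u}-h^{[ij]}\big),\qquad F(\mathbf{u})=\sum_{(i,j)\in\mathcal{P}} w_{ij}\,\mathfrak{B}^{[ij]}(\mathbf{u}),$$ and $$D_{ij}=\left\{\mathbf{u}:\ \mathbf{u}^\top H^{[ij]}\mathbf{u}+(c^{[ij]})^\top\mathbf{u}+\tfrac14 (c^{[ij]})^\top (H^{[ij]})^{+}c^{[ij]}\le\tfrac12\right\},$$ where $(H^{[ij]})^{+}$ is the Moore–Penrose pseudoinverse. Let $\mathcal{U}\subset\mathbb{R}^n$ be a bounded polytope (the convex hull of finitely many vertices). If every vertex of $\mathcal{U}$ belongs to $D_{ij}$ for every $(i,j)\in\mathcal{P}$, then $F$ is concave on $\mathcal{U}$.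
   Context: In the application, the weights are $w_{ij}=\sqrt{P_k(M^{[i]})P_k(M^{[j]})}$ (products of current model probabilities), $F$ is the upper bound on the predicted misdiagnosis probability as a function of the stacked future input $\mathbf{u}$, and $\mathcal{U}$ is a polytopic input constraint set. *)

(* Defs.v *)
From HB Require Import structures.
From mathcomp Require Import all_boot all_order all_algebra.
From mathcomp Require Import reals sequences exp.
Set Implicit Arguments. Unset Strict Implicit. Unset Printing Implicit Defensive.
Import Order.TTheory GRing.Theory Num.Theory.
Local Open Scope ring_scope.

Definition qform (R : realType) (n : nat) (x : 'cV[R]_n) (A : 'M[R]_n) (y : 'cV[R]_n) : R :=
  (x^T *m A *m y) 0 0.

Definition lform (R : realType) (n : nat) (c u : 'cV[R]_n) : R := (c^T *m u) 0 0.

Definition symmetric_mx (R : realType) (n : nat) (H : 'M[R]_n) : Prop := H^T = H.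

Definition psd_mx (R : realType) (n : nat) (H : 'M[R]_n) : Prop :=
  symmetric_mx H /\ forall x : 'cV[R]_n, 0 <= qform x H x.

Definition in_colspace (R : realType) (n : nat) (H : 'M[R]_n) (c : 'cV[R]_n) : Prop :=
  exists y : 'cV[R]_n, c = H *m y.

(* X is the Moore-Penrose pseudoinverse of H (the four Penrose conditions;
   such X exists and is unique) *)
Definition is_pinv (R : realType) (n : nat) (H X : 'M[R]_n) : Prop :=
  [/\ H *m X *m H = H, X *m H *m X = X, (H *m X)^T = H *m X & (X *m H)^T = X *m H].

Definition Bfun (R : realType) (n : nat) (H : 'M[R]_n) (c : 'cV[R]_n) (h : R)
  (u : 'cV[R]_n) : R := expR (- qform u H u - lform c u - h).

Definition Ffun (R : realType) (n : nat) (I : finType) (w : I -> R)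
  (H : I -> 'M[R]_n) (c : I -> 'cV[R]_n) (h : I -> R) (u : 'cV[R]_n) : R :=
  \sum_(p : I) w p * Bfun (H p) (c p) (h p) u.

Definition in_D (R : realType) (n : nat) (H Hp : 'M[R]_n) (c : 'cV[R]_n) (u : 'cV[R]_n) : Prop :=
  qform u H u + lform c u + 4^-1 * qform c Hp c <= 2^-1.

Definition in_hull (R : realType) (n m : nat) (V : 'I_m -> 'cV[R]_n) (u : 'cV[R]_n) : Prop :=
  exists lam : 'I_m -> R, [/\ forall k, 0 <= lam k, \sum_k lam k = 1 &
                              u = \sum_k lam k *: V k].

Definition concave_on (R : realType) (n : nat) (S : 'cV[R]_n -> Prop) (f : 'cV[R]_n -> R) : Prop :=
  forall x y : 'cV[R]_n, forall t : R, S x -> S y -> 0 <= t -> t <= 1 ->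
    t * f x + (1 - t) * f y <= f (t *: x + (1 - t) *: y).

(* Main.v *)
Require Import Defs.
From HB Require Import structures.
From mathcomp Require Import all_boot all_order all_algebra.
From mathcomp Require Import reals sequences exp.
From mathcomp Require Import boolp classical_sets topology normedtype derive realfun convex interval_inference.
From mathcomp Require Import ring lra.
Set Implicit Arguments. Unset Strict Implicit.
Import Order.TTheory GRing.Theory Num.Theory numFieldNormedType.Exports.
Local Open Scope ring_scope.

Section LA.
Context {R : realType} {n : nat}.
Implicit Types (a b u v : 'cV[R]_n) (A : 'M[R]_n).

Lemma qformDl a b A v : qform (a + b) A v = qform a A v + qform b A v.
Proof. by rewrite /qform linearD /= !mulmxDl mxE. Qed.
Lemma qformDr a b A v : qform v A (a + b) = qform v A a + qform v A b.
Proof. by rewrite /qform !mulmxDr mxE. Qed.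
Lemma qformZl k a A v : qform (k *: a) A v = k * qform a A v.
Proof. by rewrite /qform linearZ /= -!scalemxAl mxE. Qed.
Lemma qformZr k a A v : qform v A (k *: a) = k * qform v A a.
Proof. by rewrite /qform -!scalemxAr mxE. Qed.
Lemma qformNl a A v : qform (- a) A v = - qform a A v.
Proof. by rewrite -scaleN1r qformZl mulN1r. Qed.
Lemma qformNr a A v : qform v A (- a) = - qform v A a.
Proof. by rewrite -scaleN1r qformZr mulN1r. Qed.
Lemma qformBl a b A v : qform (a - b) A v = qform a A v - qform b A v.
Proof. by rewrite qformDl qformNl. Qed.
Lemma qformBr a b A v : qform v A (a - b) = qform v A a - qform v A b.
Proof. by rewrite qformDr qformNr. Qed.
Lemma qform0l A v : qform 0 A v = 0.
Proof. by rewrite /qform linear0 !mul0mx mxE. Qed.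
Lemma qform_sym A u v : symmetric_mx A -> qform u A v = qform v A u.
Proof.
move=> sA; rewrite /qform.
transitivity ((u^T *m A *m v)^T 0 0); first by rewrite [RHS]mxE.
by rewrite !trmx_mul trmxK sA mulmxA.
Qed.

Lemma qform_suml I (r : seq I) (P : pred I) (f : I -> 'cV[R]_n) A v :
  qform (\sum_(i <- r | P i) f i) A v = \sum_(i <- r | P i) qform (f i) A v.
Proof. exact: (big_morph _ (fun a b => qformDl a b A v) (qform0l A v)). Qed.
Lemma qform0r A v : qform v A 0 = 0.
Proof. by rewrite /qform !mulmx0 mxE. Qed.
Lemma qform_sumr I (r : seq I) (P : pred I) (f : I -> 'cV[R]_n) A v :
  qform v A (\sum_(i <- r | P i) f i) = \sum_(i <- r | P i) qform v A (f i).
Proof. exact: (big_morph _ (fun a b => qformDr a b A v) (qform0r A v)). Qed.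

Lemma lform_col A c y0 u : symmetric_mx A -> c = A *m y0 -> lform c u = qform y0 A u.
Proof. by move=> sA ->; rewrite /lform /qform trmx_mul sA. Qed.

Lemma pinv_col A X c y0 : symmetric_mx A -> is_pinv A X -> c = A *m y0 ->
  qform c X c = qform y0 A y0.
Proof.
move=> sA [h1 _ _ _] ->; rewrite /qform trmx_mul sA -{3}h1.
by rewrite !mulmxA.
Qed.

Lemma cs_scalar (al s Q : R) : (forall l, 0 <= al + 2 * l * s + l * l * Q) ->
  al <= 2 -> 0 <= Q -> s ^+ 2 <= 2 * Q.
Proof.
move=> H a2 Q0; have a0 := H 0.
have [Qz|Qp] := eqVneq Q 0.
  have [sz|sn] := eqVneq s 0; first by rewrite sz Qz; lra.
  have := H (- (al + 1) / (2 * s)).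
  have e : 2 * (- (al + 1) / (2 * s)) * s = - (al + 1) by field; rewrite sn.
  rewrite e Qz; lra.
have Qg : 0 < Q by rewrite lt_neqAle eq_sym Qp Q0.
have := H (- s / Q).
have e : (- s / Q) * Q = - s by field.
set l := - s / Q => hl.
have hl2 : 0 <= Q * (al + 2 * l * s + l * l * Q) by apply: mulr_ge0 => //; exact: ltW.
have E2 : Q * (al + 2 * l * s + l * l * Q) = Q * al + 2 * s * (l * Q) + (l * Q) * (l * Q) by ring.
rewrite E2 e in hl2.
have h3 : 0 <= (2 - al) * Q by apply: mulr_ge0 => //; lra.
have E3 : (2 - al) * Q = 2 * Q - Q * al by ring.
rewrite E3 in h3.
have E4 : s ^+ 2 = s * s by ring.
rewrite E4; lra.
Qed.
End LA.

Section S.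
Context {R : realType}.

Lemma is_derive_expRc (f : R -> R) (x df : R) : is_derive x 1 f df ->
  is_derive x 1 (fun y => expR (f y)) (expR (f x) * df).
Proof.
move=> H.
have df1 : derivable f x 1 by case: H.
have dc : derivable (expR \o f) x 1.
  apply/derivable1_diffP; apply: differentiable_comp.
    exact/derivable1_diffP.
  exact/derivable1_diffP/derivable_expR.
apply: DeriveDef; first exact: dc.
rewrite -derive1E (derive1_comp df1); last exact: derivable_expR.
rewrite !derive1E; case: (H) => _ ->; by case: (is_derive_expR (f x)) => _ ->.
Qed.
Lemma dP (a0 a1 a2 s : R) : is_derive s 1 (fun s => - (a0 + a1 * s + a2 * (s * s))) (- (a1 + a2 * (2 * s))).
Proof.
apply: is_derive_eq.
rewrite /GRing.scale /= !mulr1 add0r mul1r. ring.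
Qed.
Lemma conc1 (a0 a1 a2 t : R) :
  (forall s, 0 <= s <= 1 -> (a1 + a2 * (2 * s)) ^+ 2 <= 2 * a2) -> 0 <= t -> t <= 1 ->
  t * expR (- (a0 + a1 * 1 + a2 * (1 * 1))) + (1 - t) * expR (- (a0 + a1 * 0 + a2 * (0 * 0)))
  <= expR (- (a0 + a1 * t + a2 * (t * t))).
Proof.
move=> Hc t0 t1.
pose P := fun s : R => - (a0 + a1 * s + a2 * (s * s)).
pose f := fun s : R => - expR (P s).
pose Df := fun s : R => (a1 + a2 * (2 * s)) * expR (P s).
have hf : forall s : R, is_derive s 1 f (Df s).
  move=> s; have := is_deriveN (is_derive_expRc (dP a0 a1 a2 s)).
  move=> H; suff -> : Df s = - (expR (P s) * - (a1 + a2 * (2 * s))) by exact: H.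
  by rewrite /Df mulrN opprK mulrC.
have eDf : 'D_1 f = Df by apply/funext => s; case: (hf s) => _ ->.
have hDf : forall s : R, is_derive s 1 Df ((2 * a2 - (a1 + a2 * (2 * s)) ^+ 2) * expR (P s)).
  move=> s.
  have h1 : is_derive s 1 (fun s => a1 + a2 * (2 * s)) (a2 * 2).
    apply: is_derive_eq. by rewrite /GRing.scale /= !mulr1 add0r mul1r; ring.
  have := is_deriveM h1 (is_derive_expRc (dP a0 a1 a2 s)).
  set d := (X in is_derive _ _ _ X) => H.
  suff -> : (2 * a2 - (a1 + a2 * (2 * s)) ^+ 2) * expR (P s) = d by exact: H.
  rewrite /d /GRing.scale /=. rewrite /P. ring.
have ct : forall s : R, {for s, continuous f}.
  move=> s; apply: differentiable_continuous; apply/derivable1_diffP.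
  by case: (hf s).
have u0 : 0 <= 1 - t by lra.
have u1 : 1 - t <= 1 by lra.
have := @second_derivative_convex R f 0 1 _ _ _ _ _ (Itv01 u0 u1) ler01.
rewrite !convRE /=.
have e1 : (1 - t) * 0 + unstable.onem (1 - t) * 1 = t by rewrite /unstable.onem; ring.
rewrite e1 /unstable.onem /f.
have e2 : 1 - (1 - t) = t by ring.
rewrite e2 /P => H.
have: - expR (- (a0 + a1 * t + a2 * (t * t))) <=
  (1 - t) * - expR (- (a0 + a1 * 0 + a2 * (0 * 0))) +
  t * - expR (- (a0 + a1 * 1 + a2 * (1 * 1))).
  apply: H.
  - move=> x /andP[x0 x1]; rewrite eDf; case: (hDf x) => _ ->.
    apply: mulr_ge0; last exact: expR_ge0.
    rewrite subr_ge0; apply: Hc; rewrite ltW // ltW //.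
  - exact/cvg_at_left_filter/ct.
  - exact/cvg_at_right_filter/ct.
  - by move=> x _; case: (hf x).
  - by move=> x _; rewrite eDf; case: (hDf x).
rewrite !mulrN -opprD lerN2 addrC.
done.
Qed.
End S.

Section Main.
Context {R : realType} {n : nat}.

Lemma inD_N (A X : 'M[R]_n) c y0 u : psd_mx A -> is_pinv A X -> c = A *m y0 ->
  in_D A X c u -> qform (2 *: u + y0) A (2 *: u + y0) <= 2.
Proof.
move=> [sA _] pX cE; rewrite /in_D (lform_col _ sA cE) (pinv_col sA pX cE) => h.
rewrite !(qformDl, qformDr, qformZl, qformZr) (qform_sym y0 u sA).
rewrite (qform_sym y0 u sA) in h; lra.
Qed.

Lemma hull_N (A : 'M[R]_n) y0 m (V : 'I_m -> 'cV[R]_n) x : psd_mx A ->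
  (forall k, qform (2 *: V k + y0) A (2 *: V k + y0) <= 2) ->
  in_hull V x -> qform (2 *: x + y0) A (2 *: x + y0) <= 2.
Proof.
move=> [sA pA] hV [lam [l0 l1 ->]].
have -> : 2 *: (\sum_k lam k *: V k) + y0 = \sum_k lam k *: (2 *: V k + y0).
  rewrite scaler_sumr -[y0 in LHS]scale1r -l1 scaler_suml -big_split /=.
  by apply: eq_bigr => k _; rewrite scalerDr !scalerA mulrC.
set z := fun k => 2 *: V k + y0.
rewrite qform_suml.
have hb : forall k l, qform (z k) A (z l) <= 2.
  move=> k l; have := pA (z k - z l).
  rewrite !qformBl !qformBr (qform_sym (z l) (z k) sA).
  have := hV k; have := hV l; rewrite -/(z k) -/(z l); lra.
apply: (@le_trans _ _ (\sum_k lam k * 2)); last by rewrite -big_distrl /= l1; lra.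
apply: ler_sum => k _; rewrite qformZl qform_sumr.
apply: ler_wpM2l => //.
apply: (@le_trans _ _ (\sum_l lam l * 2)); last by rewrite -big_distrl /= l1; lra.
apply: ler_sum => l _; rewrite qformZr; apply: ler_wpM2l => //; exact: hb.
Qed.

End Main.

Section Seg.
Context {R : realType} {n : nat}.

Lemma seg (A : 'M[R]_n) c h y0 x y t : psd_mx A -> c = A *m y0 ->
  qform (2 *: x + y0) A (2 *: x + y0) <= 2 -> qform (2 *: y + y0) A (2 *: y + y0) <= 2 ->
  0 <= t -> t <= 1 ->
  t * Bfun A c h x + (1 - t) * Bfun A c h y <= Bfun A c h (t *: x + (1 - t) *: y).
Proof.
move=> [sA pA] cE hx hy t0 t1.
have a2g : 0 <= qform (x - y) A (x - y) by exact: pA.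
set d := x - y in a2g *.
have ex : x = y + 1 *: d by rewrite scale1r /d addrC subrK.
have ey : y = y + 0 *: d by rewrite scale0r addr0.
have eu : t *: x + (1 - t) *: y = y + t *: d.
  by rewrite /d scalerBr scalerBl scale1r addrCA.
clearbody d.
set a0 := qform y A y + qform y0 A y + h.
set a1 := 2 * qform y A d + qform y0 A d.
set a2 := qform d A d.
have E : forall s, Bfun A c h (y + s *: d) = expR (- (a0 + a1 * s + a2 * (s * s))).
  move=> s; rewrite /Bfun (lform_col _ sA cE) !(qformDl, qformDr, qformZl, qformZr).
  rewrite (qform_sym d y sA) /a0 /a1 /a2; congr expR; ring.
have Ex : Bfun A c h x = expR (- (a0 + a1 * 1 + a2 * (1 * 1))) by rewrite {1}ex E.
have Ey : Bfun A c h y = expR (- (a0 + a1 * 0 + a2 * (0 * 0))) by rewrite {1}ey E.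
rewrite Ex Ey eu E; apply: conc1 => // s /andP[s0 s1].
set zs := 2 *: (y + s *: d) + y0.
have es : a1 + a2 * (2 * s) = qform zs A d.
  rewrite /zs /a1 /a2 !(qformDl, qformZl); ring.
have ezs : zs = 2 *: (y + s *: d) + y0 by [].
clearbody zs.
rewrite es; apply: (@cs_scalar _ (qform zs A zs)) => //.
- move=> l; have := pA (zs + l *: d).
  rewrite !(qformDl, qformDr, qformZl, qformZr) (qform_sym d zs sA) -/a2.
  move=> H; have E2 : forall a b c : R, a + l * b + l * (b + l * c) = a + 2 * l * b + l * l * c by move=> *; ring.
  by rewrite -E2.
- rewrite ex in hx.
  have h2 : 0 <= s * (2 - qform (2 *: (y + 1 *: d) + y0) A (2 *: (y + 1 *: d) + y0)).
    by apply: mulr_ge0 => //; rewrite subr_ge0.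
  have h3 : 0 <= (1 - s) * (2 - qform (2 *: y + y0) A (2 *: y + y0)).
    by apply: mulr_ge0; [lra | rewrite subr_ge0].
  have h1 : 0 <= a2 * (s - s * s) by apply: mulr_ge0 => //; nra.
  move: h1 h2 h3; rewrite ezs !(qformDl, qformDr, qformZl, qformZr).
  rewrite (qform_sym d y sA) (qform_sym d y0 sA) (qform_sym y0 y sA) -/a2.
  move=> h1 h2 h3.
  lra.
Qed.
End Seg.

Theorem mainTheorem2 (R : realType) (n : nat) (I : finType)
  (H Hp : I -> 'M[R]_n) (c : I -> 'cV[R]_n) (h w : I -> R)
  (m : nat) (V : 'I_m -> 'cV[R]_n) :
  (0 < n)%N ->
  (forall p, psd_mx (H p)) ->
  (forall p, is_pinv (H p) (Hp p)) ->
  (forall p, in_colspace (H p) (c p)) ->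
  (forall p, 0 <= w p) ->
  (forall p k, in_D (H p) (Hp p) (c p) (V k)) ->
  concave_on (in_hull V) (Ffun w H c h).
Proof.
move=> _ psd pinv col w0 inD x y t hx hy t0 t1.
rewrite /Ffun !big_distrr -big_split /=; apply: ler_sum => p _.
rewrite mulrCA [(1 - t) * _]mulrCA -mulrDr; apply: ler_wpM2l => //.
have [y0 cE] := col p.
have hV k : qform (2 *: V k + y0) (H p) (2 *: V k + y0) <= 2.
  exact: (inD_N (psd p) (pinv p) cE (inD p k)).
exact: (seg (h p) (psd p) cE (hull_N (psd p) hV hx) (hull_N (psd p) hV hy) t0 t1).
Qed.
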